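(* Let $S$ be a semilattice. Then the normal dual $N^*\mathbb{L}(S)$ of $\mathbb{L}(S)$ is isomorphic to the normal category $\mathbb{R}(S)$, and the normal dual $N^*\mathbb{R}(S)$ of $\mathbb{R}(S)$ is isomorphic to the normal category $\mathbb{L}(S)$.
   Context: A semilattice is a commutative semigroup in which every element is idempotent. The category $\mathbb{L}(S)$ has objects $Se$, $e\in S$, morphisms $\rho(e,u,f)\colon Se\to Sf$, $x\mapsto xu$, $u\in eSf$, composed left to right; $\mathbb{R}(S)$ has objects $eS$, morphisms $\lambda(e,u,f)\colon eS\to fS$, $x\mapsto ux$, $u\in fSe$, with $\lambda(e,u,f)\lambda(f,v,h)=\lambda(e,vu,h)$. In either category, a normal cone with apex $c$ is a family $\gamma(a)\colon a\to c$ with (inclusion $a\to b$)$\gamma(b)=\gamma(a)$ whenever $a\subseteq b$ and some $\gamma(a)$ an isomorphism; the epimorphic component of $\rho(e,u,f)$ (resp. $\lambda(e,u,f)$) is $\rho(e,u,g)$ with $Sg=Su$ (resp. $\lambda(e,u,g)$ with $gS=uS$); the cones form a semigroup $T\mathbb{L}(S)$ (resp. $T\mathbb{R}(S)$) under $(\gamma\cdot\delta)(a)=\gamma(a)\,\delta(c_\gamma)^\circ$. For a cone $\gamma$ with apex $c$ and epimorphism $h\colon c\to c'$, $\gamma\ast h$ is $a\mapsto\gamma(a)h$. The normal dual $N^*\mathcal{C}$ of $\mathcal{C}\in\{\mathbb{L}(S),\mathbb{R}(S)\}$ is the category whose objects are the functors $H(\gamma;-)\colon\mathcal{C}\to\mathbf{Set}$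 for cones $\gamma$, with $H(\gamma;d)=\{\gamma\ast f^\circ : f\colon c_\gamma\to d\}$, $H(\gamma;g)\colon\gamma\ast f^\circ\mapsto\gamma\ast(fg)^\circ$, and whose morphisms are natural transformations; isomorphism is as normal categories. *)

(* Defs.v *)
From Stdlib Require Import Setoid.

(* Categories with inclusions (data of a normal category needed for    *)
(* the notion of isomorphism of normal categories). Composition is     *)
(* written left to right: comp f g = "f then g".                       *)
Record catI := CatI {
  Ob : Type;
  Hom : Ob -> Ob -> Type;
  idm : forall a, Hom a a;
  comp : forall a b c, Hom a b -> Hom b c -> Hom a c;
  sub : Ob -> Ob -> Prop;
  incl : forall a b, sub a b -> Hom a b
}.

(* plus the epimorphic component f° : a -> im f of a morphism f *)
Record catIE := CatIE {
  base :> catI;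
  im : forall a b, Hom base a b -> Ob base;
  epi : forall a b (f : Hom base a b), Hom base a (im a b f)
}.

Definition bij {A B : Type} (F : A -> B) : Prop :=
  (forall x y, F x = F y -> x = y) /\ (forall y, exists x, F x = y).

(* Isomorphism of normal categories: an inclusion-preserving functor which is
   bijective on objects and on every hom-set (hence an isomorphism of
   categories), reflecting inclusions, so that its inverse is also
   inclusion-preserving. *)
Definition iso_ncat (C D : catI) : Prop :=
  exists (F : Ob C -> Ob D) (FH : forall a b, Hom C a b -> Hom D (F a) (F b)),
    (forall a, FH a a (idm C a) = idm D (F a)) /\
    (forall a b c (f : Hom C a b) (g : Hom C b c),
        FH a c (comp C a b c f g) = comp D (F a) (F b) (F c) (FH a b f) (FH b c g)) /\
    bij F /\
    (forall a b, bij (FH a b)) /\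
    (forall a b, sub C a b <-> sub D (F a) (F b)) /\
    (forall a b (h : sub C a b) (h' : sub D (F a) (F b)),
        FH a b (incl C a b h) = incl D (F a) (F b) h').

Definition family (C : catI) : Type := {c : Ob C & forall a, Hom C a c}.

Definition is_iso (C : catI) a b (f : Hom C a b) : Prop :=
  exists g : Hom C b a, comp C a b a f g = idm C a /\ comp C b a b g f = idm C b.

Definition normal_cone (C : catI) (g : family C) : Prop :=
  (forall a b (h : sub C a b),
      comp C a b (projT1 g) (incl C a b h) (projT2 g b) = projT2 g a) /\
  exists a, is_iso C a (projT1 g) (projT2 g a).

Definition star (C : catI) (g : family C) (c' : Ob C) (h : Hom C (projT1 g) c')
  : family C := existT _ c' (fun a => comp C a (projT1 g) c' (projT2 g a) h).

Definition Hset (C : catIE) (g : family C) (d : Ob C) : family C -> Prop :=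
  fun x => exists f : Hom C (projT1 g) d, x = star C g _ (epi C _ _ f).

(* graph of H(gamma; k) : gamma * f° |-> gamma * (f k)° *)
Definition Hrel (C : catIE) (g : family C) (d d' : Ob C) (k : Hom C d d')
  : family C -> family C -> Prop :=
  fun x y => exists f : Hom C (projT1 g) d,
    x = star C g _ (epi C _ _ f) /\
    y = star C g _ (epi C _ _ (comp C _ _ _ f k)).

(* a Set-valued functor on C, given by its object map and (the graph of)
   its morphism map *)
Definition functorData (C : catI) : Type :=
  ((forall d : Ob C, family C -> Prop) *
   (forall d d' : Ob C, Hom C d d' -> family C -> family C -> Prop))%type.

Definition NOb (C : catIE) : Type :=
  {X : functorData C | exists g, normal_cone C g /\ X = (Hset C g, Hrel C g)}.

Definition FO {C : catIE} (X : NOb C) := fst (proj1_sig X).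
Definition FM {C : catIE} (X : NOb C) := snd (proj1_sig X).

Definition NHom (C : catIE) (X Y : NOb C) : Type :=
  {eta : forall d, {x | FO X d x} -> {y | FO Y d y} |
    forall d d' (k : Hom C d d') (x : {x | FO X d x}) (y : {y | FO X d' y}),
      FM X d d' k (proj1_sig x) (proj1_sig y) ->
      FM Y d d' k (proj1_sig (eta d x)) (proj1_sig (eta d' y))}.

Definition Nid (C : catIE) (X : NOb C) : NHom C X X.
Proof. exists (fun d x => x). intros d d' k x y H; exact H. Defined.

Definition Ncomp (C : catIE) (X Y Z : NOb C) (e1 : NHom C X Y) (e2 : NHom C Y Z)
  : NHom C X Z.
Proof.
  exists (fun d x => proj1_sig e2 d (proj1_sig e1 d x)).
  intros d d' k x y H. apply (proj2_sig e2). apply (proj2_sig e1). exact H.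
Defined.

Definition Nsub (C : catIE) (X Y : NOb C) : Prop :=
  (forall d x, FO X d x -> FO Y d x) /\
  (forall d d' k x y, FM X d d' k x y -> FM Y d d' k x y).

Definition Nincl (C : catIE) (X Y : NOb C) (h : Nsub C X Y) : NHom C X Y.
Proof.
  exists (fun d x => exist _ (proj1_sig x) (proj1 h d _ (proj2_sig x))).
  intros d d' k x y H. simpl. exact (proj2 h _ _ _ _ _ H).
Defined.

Definition NDual (C : catIE) : catI :=
  CatI (NOb C) (NHom C) (Nid C) (Ncomp C) (Nsub C) (Nincl C).

Record semilattice := Semilattice {
  car : Type;
  smul : car -> car -> car;
  smulA : forall x y z, smul x (smul y z) = smul (smul x y) z;
  smulC : forall x y, smul x y = smul y x;
  smulI : forall x, smul x x = x
}.

Definition sand (S : semilattice) (e f : car S) (u : car S) : Prop :=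
  exists s, u = smul S (smul S e s) f.

Lemma sand_char (S : semilattice) e f u :
  sand S e f u -> smul S e u = u /\ smul S u f = u.
Proof.
  intros [s ->]. split.
  - rewrite !smulA, smulI. reflexivity.
  - rewrite <- smulA, smulI. reflexivity.
Qed.

Lemma sand_intro (S : semilattice) e f u :
  smul S e u = u -> smul S u f = u -> sand S e f u.
Proof. intros H1 H2. exists u. rewrite H1, H2. reflexivity. Qed.

Lemma sand_mul (S : semilattice) e f g u v :
  sand S e f u -> sand S f g v -> sand S e g (smul S u v).
Proof.
  intros Hu Hv. destruct (sand_char S _ _ _ Hu) as [Hu1 _].
  destruct (sand_char S _ _ _ Hv) as [_ Hv2].
  apply sand_intro.
  - rewrite smulA, Hu1. reflexivity.
  - rewrite <- smulA, Hv2. reflexivity.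
Qed.

Lemma sand_id (S : semilattice) e : sand S e e e.
Proof. apply sand_intro; apply smulI. Qed.

Lemma sand_epi (S : semilattice) e f u : sand S e f u -> sand S e u u.
Proof.
  intros Hu. destruct (sand_char S _ _ _ Hu) as [H1 _].
  apply sand_intro; [exact H1 | apply smulI].
Qed.

Lemma sand_epiR (S : semilattice) e f u : sand S f e u -> sand S u e u.
Proof.
  intros Hu. destruct (sand_char S _ _ _ Hu) as [_ H2].
  apply sand_intro; [apply smulI | exact H2].
Qed.

Definition Lsub (S : semilattice) (e f : car S) : Prop :=
  forall x, (exists s, x = smul S s e) -> exists s, x = smul S s f.
Definition Rsub (S : semilattice) (e f : car S) : Prop :=
  forall x, (exists s, x = smul S e s) -> exists s, x = smul S f s.

Lemma Lsub_sand (S : semilattice) e f : Lsub S e f -> sand S e f e.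
Proof.
  intros H. destruct (H e (ex_intro _ e (eq_sym (smulI S e)))) as [s Hs].
  apply sand_intro; [apply smulI |].
  rewrite Hs at 1. rewrite <- smulA, smulI. symmetry; exact Hs.
Qed.

Lemma Rsub_sand (S : semilattice) e f : Rsub S e f -> sand S f e e.
Proof.
  intros H. destruct (H e (ex_intro _ e (eq_sym (smulI S e)))) as [s Hs].
  apply sand_intro; [| apply smulI].
  rewrite Hs at 1. rewrite smulA, smulI. symmetry; exact Hs.
Qed.

(* L(S): object Se is represented by e; rho(e,u,f) by u \in eSf *)
Definition Lmor (S : semilattice) (e f : car S) : Type := {u | sand S e f u}.

Definition LS (S : semilattice) : catIE :=
  CatIE
    (CatI (car S) (Lmor S)
       (fun e => exist _ e (sand_id S e))
       (fun e f g (u : Lmor S e f) (v : Lmor S f g) =>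
          exist _ (smul S (proj1_sig u) (proj1_sig v))
            (sand_mul S _ _ _ _ _ (proj2_sig u) (proj2_sig v)))
       (Lsub S)
       (fun e f h => exist _ e (Lsub_sand S e f h)))
    (fun e f (u : Lmor S e f) => proj1_sig u)   (* Sg = Su : g = u *)
    (fun e f (u : Lmor S e f) =>
       exist _ (proj1_sig u) (sand_epi S _ _ _ (proj2_sig u))).

(* R(S): object eS is represented by e; lambda(e,u,f) by u \in fSe;
   lambda(e,u,f) lambda(f,v,h) = lambda(e, vu, h) *)
Definition Rmor (S : semilattice) (e f : car S) : Type := {u | sand S f e u}.

Definition RS (S : semilattice) : catIE :=
  CatIE
    (CatI (car S) (Rmor S)
       (fun e => exist _ e (sand_id S e))
       (fun e f h (u : Rmor S e f) (v : Rmor S f h) =>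
          exist _ (smul S (proj1_sig v) (proj1_sig u))
            (sand_mul S _ _ _ _ _ (proj2_sig v) (proj2_sig u)))
       (Rsub S)
       (fun e f h => exist _ e (Rsub_sand S e f h)))
    (fun e f (u : Rmor S e f) => proj1_sig u)   (* gS = uS : g = u *)
    (fun e f (u : Rmor S e f) =>
       exist _ (proj1_sig u) (sand_epiR S _ _ _ (proj2_sig u))).

(* Main.v *)
Require Import Defs.
From Stdlib Require Import Setoid FunctionalExtensionality ProofIrrelevance IndefiniteDescription.

Definition sle (S : semilattice) (x y : car S) : Prop := smul S x y = x.

Section Alg.
Variable S : semilattice.
Local Infix "**" := (smul S) (at level 40, left associativity).

Lemma le_refl a : sle S a a. Proof. apply smulI. Qed.
Lemma le_ml a b : sle S (a ** b) a.
Proof. unfold sle. rewrite (smulC S (a ** b) a), smulA, smulI. reflexivity. Qed.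
Lemma le_mr a b : sle S (a ** b) b.
Proof. unfold sle. rewrite <- smulA, smulI. reflexivity. Qed.
Lemma le_trans u v w : sle S u v -> sle S v w -> sle S u w.
Proof. unfold sle. intros H1 H2. rewrite <- H1, <- smulA, H2. reflexivity. Qed.
Lemma le_meet u a b : sle S u a -> sle S u b -> sle S u (a ** b).
Proof. unfold sle. intros H1 H2. rewrite smulA, H1, H2. reflexivity. Qed.
Lemma le_antisym u v : sle S u v -> sle S v u -> u = v.
Proof. unfold sle. intros H1 H2. transitivity (u ** v); [symmetry; exact H1 | rewrite smulC; exact H2]. Qed.
Lemma le_comm u v : sle S u v -> v ** u = u.
Proof. unfold sle. intros H. rewrite smulC. exact H. Qed.
End Alg.

Lemma sig_eq {A : Type} {P : A -> Prop} (x y : sig P) : proj1_sig x = proj1_sig y -> x = y.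
Proof. destruct x, y; simpl; intros ->. f_equal. apply proof_irrelevance. Qed.

Record semcat (S : semilattice) := SemCat {
  sH : car S -> car S -> Type;
  sval : forall a b, sH a b -> car S;
  sidm : forall a, sH a a;
  scomp : forall a b c, sH a b -> sH b c -> sH a c;
  ssub : car S -> car S -> Prop;
  sincl : forall a b, ssub a b -> sH a b;
  sepi : forall a b (f : sH a b), sH a (sval a b f);
  smk : forall a b u, sle S u a -> sle S u b -> sH a b;
  sval_inj : forall a b (f g : sH a b), sval a b f = sval a b g -> f = g;
  sval_le1 : forall a b f, sle S (sval a b f) a;
  sval_le2 : forall a b f, sle S (sval a b f) b;
  sval_mk : forall a b u h1 h2, sval a b (smk a b u h1 h2) = u;
  sval_idm : forall a, sval a a (sidm a) = a;
  sval_comp : forall a b c f g, sval a c (scomp a b c f g) = smul S (sval a b f) (sval b c g);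
  ssub_le : forall a b, ssub a b <-> sle S a b;
  sval_incl : forall a b h, sval a b (sincl a b h) = a;
  sval_epi : forall a b f, sval a (sval a b f) (sepi a b f) = sval a b f
}.
Arguments sH {S} _ _ _.
Arguments sval {S} _ {a b} _.
Arguments sidm {S} _ _.
Arguments scomp {S} _ {a b c} _ _.
Arguments ssub {S} _ _ _.
Arguments sincl {S} _ {a b} _.
Arguments sepi {S} _ {a b} _.
Arguments smk {S} _ a b u _ _.
Arguments sval_inj {S} _ {a b f g} _.
Arguments sval_le1 {S} _ {a b} f.
Arguments sval_le2 {S} _ {a b} f.
Arguments sval_mk {S} _ {a b u h1 h2}.
Arguments sval_idm {S} _ {a}.
Arguments sval_comp {S} _ {a b c f g}.
Arguments ssub_le {S} _ a b.
Arguments sval_incl {S} _ {a b h}.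
Arguments sval_epi {S} _ {a b f}.

Definition toCatIE {S} (C : semcat S) : catIE :=
  CatIE (CatI (car S) (sH C) (sidm C) (@scomp S C) (ssub C) (@sincl S C))
    (@sval S C) (@sepi S C).

Lemma subset_eq_irr {A : Type} {P : A -> Prop} (x y : sig P) : proj1_sig x = proj1_sig y -> x = y.
Proof. apply sig_eq. Qed.

Definition LSc (S : semilattice) : semcat S.
Proof.
refine (SemCat S (Lmor S) (fun e f u => proj1_sig u) (fun e => exist _ e (sand_id S e))
  (fun e f g (u : Lmor S e f) (v : Lmor S f g) => exist _ (smul S (proj1_sig u) (proj1_sig v)) (sand_mul S _ _ _ _ _ (proj2_sig u) (proj2_sig v)))
  (Lsub S) (fun e f h => exist _ e (Lsub_sand S e f h))
  (fun e f (u : Lmor S e f) => exist _ (proj1_sig u) (sand_epi S _ _ _ (proj2_sig u)))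
  (fun a b u h1 h2 => exist _ u (sand_intro S a b u (le_comm S _ _ h1) h2))
  _ _ _ _ _ _ _ _ _).
- intros a b f g; apply sig_eq.
- intros a b [u Hu]; simpl. destruct (sand_char S _ _ _ Hu) as [H1 _].
  unfold sle; rewrite smulC; exact H1.
- intros a b [u Hu]; simpl. destruct (sand_char S _ _ _ Hu) as [_ H2]. exact H2.
- reflexivity.
- reflexivity.
- reflexivity.
- intros a b. split.
  + intros H. destruct (sand_char S _ _ _ (Lsub_sand S a b H)) as [_ H2]. exact H2.
  + intros H x [s ->]. exists (smul S s a). unfold sle in H.
    rewrite <- smulA, H. reflexivity.
- reflexivity.
- reflexivity.
Defined.

Definition RSc (S : semilattice) : semcat S.
Proof.
refine (SemCat S (Rmor S) (fun e f u => proj1_sig u) (fun e => exist _ e (sand_id S e))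
  (fun e f h (u : Rmor S e f) (v : Rmor S f h) =>
          exist _ (smul S (proj1_sig v) (proj1_sig u))
            (sand_mul S _ _ _ _ _ (proj2_sig v) (proj2_sig u)))
  (Rsub S) (fun e f h => exist _ e (Rsub_sand S e f h))
  (fun e f (u : Rmor S e f) =>
       exist _ (proj1_sig u) (sand_epiR S _ _ _ (proj2_sig u)))
  (fun a b u h1 h2 => exist _ u (sand_intro S b a u (le_comm S _ _ h2) h1))
  _ _ _ _ _ _ _ _ _).
- intros a b f g; apply sig_eq.
- intros a b [u Hu]; simpl. destruct (sand_char S _ _ _ Hu) as [_ H2]. exact H2.
- intros a b [u Hu]; simpl. destruct (sand_char S _ _ _ Hu) as [H1 _].
  unfold sle; rewrite smulC; exact H1.
- reflexivity.
- reflexivity.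
- intros; simpl. apply smulC.
- intros a b. split.
  + intros H. destruct (sand_char S _ _ _ (Rsub_sand S a b H)) as [H1 _].
    unfold sle; rewrite smulC; exact H1.
  + intros H x [s ->]. exists (smul S a s). unfold sle in H.
    rewrite smulA, (smulC S b a), H. reflexivity.
- reflexivity.
- reflexivity.
Defined.


Section Gen.
Variable S : semilattice.
Variables C D : semcat S.
Local Infix "**" := (smul S) (at level 40, left associativity).
Local Notation CC := (toCatIE C).

Definition cone (c : car S) : family CC :=
  existT (fun c0 => forall a, sH C a c0) c
    (fun a => smk C a c (a ** c) (le_ml S a c) (le_mr S a c)).

Lemma val_cone c a : sval C (projT2 (cone c) a) = a ** c.
Proof. simpl. apply (sval_mk C). Qed.

Lemma fam_eq (x : family CC) :
  (forall a, sval C (projT2 x a) = a ** projT1 x) -> x = cone (projT1 x).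
Proof.
  destruct x as [c g]; simpl; intro H. unfold cone. f_equal.
  apply functional_extensionality_dep; intro a. apply (sval_inj C).
  rewrite (sval_mk C). apply H.
Qed.

Lemma cone_inj u v : cone u = cone v -> u = v.
Proof. intro H. exact (f_equal (@projT1 _ _) H). Qed.

Lemma absorb a c f : sle S f c -> a ** c ** f = a ** f.
Proof. intro H. rewrite <- smulA, (le_comm S _ _ H). reflexivity. Qed.

Lemma star_cone c d (f : sH C c d) :
  star CC (cone c) _ (sepi C f) = cone (sval C f).
Proof.
  apply fam_eq. intro a. simpl.
  rewrite (sval_comp C), (sval_mk C), (sval_epi C).
  apply absorb, (sval_le1 C).
Qed.

Lemma Hset_cone c d x :
  Hset CC (cone c) d x <-> exists u, sle S u c /\ sle S u d /\ x = cone u.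
Proof.
  split.
  - intros [f ->]. exists (sval C f). split; [apply (sval_le1 C)|].
    split; [apply (sval_le2 C)|]. apply star_cone.
  - intros [u [h1 [h2 ->]]]. exists (smk C c d u h1 h2).
    rewrite <- (sval_mk C (a:=c) (b:=d) (u:=u) (h1:=h1) (h2:=h2)) at 1.
    symmetry. apply star_cone.
Qed.

Lemma Hrel_cone c d d' (k : sH C d d') x y :
  Hrel CC (cone c) d d' k x y <->
  exists f : sH C c d, x = cone (sval C f) /\ y = cone (sval C f ** sval C k).
Proof.
  split.
  - intros [f [-> ->]]. exists f. split; [apply star_cone|].
    etransitivity; [apply (star_cone c d' (scomp C f k))|].
    rewrite (sval_comp C). reflexivity.
  - intros [f [-> ->]]. exists f. split; [symmetry; apply star_cone|].
    symmetry. etransitivity; [apply (star_cone c d' (scomp C f k))|].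
    rewrite (sval_comp C). reflexivity.
Qed.

Lemma cone_normal c : normal_cone CC (cone c).
Proof.
  split.
  - intros a b h. apply (sval_inj C). simpl projT1.
    change (sval C (scomp C (sincl C h) (projT2 (cone c) b)) = sval C (projT2 (cone c) a)).
    rewrite (sval_comp C), (sval_incl C), !val_cone.
    apply (ssub_le C) in h. unfold sle in h. rewrite smulA, h. reflexivity.
  - exists c. exists (sidm C c). split; apply (sval_inj C);
    change (sval C (scomp C (sidm C c) (sidm C c)) = sval C (sidm C c)) ||
    change (sval C (scomp C (projT2 (cone c) c) (sidm C c)) = sval C (sidm C c)) ||
    change (sval C (scomp C (sidm C c) (projT2 (cone c) c)) = sval C (sidm C c));
    rewrite (sval_comp C); try rewrite val_cone; rewrite !(sval_idm C), !smulI; reflexivity.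
Qed.

Lemma normal_cone_eq g : normal_cone CC g -> g = cone (projT1 g).
Proof.
  destruct g as [c gm]. intros [Hsub [a [g' [E1 E2]]]]. simpl in *.
  apply (f_equal (sval C)) in E1. apply (f_equal (sval C)) in E2.
  change (sval C (scomp C (gm a) g') = sval C (sidm C a)) in E1.
  change (sval C (scomp C g' (gm a)) = sval C (sidm C c)) in E2.
  rewrite (sval_comp C), (sval_idm C) in E1. rewrite (sval_comp C), (sval_idm C) in E2.
  assert (Hac : a = c) by (rewrite <- E1, <- E2; apply smulC).
  subst c.
  assert (Hga : sval C (gm a) = a).
  { pose proof (sval_le1 C (gm a)) as L. unfold sle in L.
    revert L E1. generalize (sval C (gm a)) (sval C g'). intros f0 g0 L E1.
    transitivity (f0 ** a); [symmetry; exact L|].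
    rewrite <- E1 at 1. rewrite smulA, smulI. exact E1. }
  apply fam_eq. intro b. simpl.
  assert (H1 : sval C (gm (b ** a)) = b ** a).
  { assert (h : ssub C (b ** a) a) by (apply (ssub_le C); apply le_mr).
    pose proof (Hsub _ _ h) as Hs. apply (f_equal (sval C)) in Hs.
    change (sval C (scomp C (sincl C h) (gm a)) = sval C (gm (b ** a))) in Hs.
    rewrite (sval_comp C), (sval_incl C), Hga in Hs. rewrite <- Hs.
    apply le_mr. }
  assert (h : ssub C (b ** a) b) by (apply (ssub_le C); apply le_ml).
  pose proof (Hsub _ _ h) as Hs. apply (f_equal (sval C)) in Hs.
  change (sval C (scomp C (sincl C h) (gm b)) = sval C (gm (b ** a))) in Hs.
  rewrite (sval_comp C), (sval_incl C), H1 in Hs. rewrite <- Hs.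
  symmetry. apply le_comm. apply le_meet; [apply (sval_le1 C) | apply (sval_le2 C)].
Qed.


Definition chosen (X : NOb CC) :
  {g | normal_cone CC g /\ proj1_sig X = (Hset CC g, Hrel CC g)} :=
  constructive_indefinite_description _ (proj2_sig X).

Definition Fo (X : NOb CC) : car S := projT1 (proj1_sig (chosen X)).

Lemma F_spec (X : NOb CC) : proj1_sig X = (Hset CC (cone (Fo X)), Hrel CC (cone (Fo X))).
Proof.
  unfold Fo. destruct (chosen X) as [g [Hn He]]. cbn [proj1_sig].
  rewrite <- (normal_cone_eq g Hn). exact He.
Qed.

Lemma FO_eq (X : NOb CC) : FO X = Hset CC (cone (Fo X)).
Proof. unfold FO. rewrite F_spec. reflexivity. Qed.
Lemma FM_eq (X : NOb CC) : FM X = Hrel CC (cone (Fo X)).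
Proof. unfold FM. rewrite F_spec. reflexivity. Qed.

Lemma FM_iff (X : NOb CC) d d' k a b : FM X d d' k a b <-> Hrel CC (cone (Fo X)) d d' k a b.
Proof. rewrite FM_eq. reflexivity. Qed.
Lemma FO_iff (X : NOb CC) d a : FO X d a <-> Hset CC (cone (Fo X)) d a.
Proof. rewrite FO_eq. reflexivity. Qed.

Definition Xof c : NOb CC :=
  exist _ (Hset CC (cone c), Hrel CC (cone c))
    (ex_intro _ (cone c) (conj (cone_normal c) eq_refl)).

Lemma F_Xof c : Fo (Xof c) = c.
Proof.
  pose proof (F_spec (Xof c)) as H. simpl in H.
  apply (f_equal fst) in H; simpl in H.
  symmetry. apply le_antisym.
  - assert (Hc : Hset CC (cone c) c (cone c))
      by (apply Hset_cone; exists c; repeat split; try apply le_refl).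
    rewrite H in Hc. apply Hset_cone in Hc as [u [h1 [h2 E]]].
    apply cone_inj in E. subst u. exact h1.
  - set (c' := Fo (Xof c)) in *.
    assert (Hc : Hset CC (cone c') c' (cone c'))
      by (apply Hset_cone; exists c'; repeat split; try apply le_refl).
    rewrite <- H in Hc. apply Hset_cone in Hc as [u [h1 [h2 E]]].
    apply cone_inj in E. subst u. exact h1.
Qed.

Lemma X_Xof (X : NOb CC) : X = Xof (Fo X).
Proof. apply sig_eq. simpl. apply F_spec. Qed.

Lemma memX (X : NOb CC) : FO X (Fo X) (cone (Fo X)).
Proof. rewrite FO_eq. apply Hset_cone. exists (Fo X). repeat split; apply le_refl. Qed.

Lemma mem_char (X : NOb CC) (d : car S) (y : family CC) : FO X d y ->
  sle S (projT1 y) (Fo X) /\ sle S (projT1 y) d /\ y = cone (projT1 y).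
Proof.
  rewrite FO_eq. intro H. apply Hset_cone in H as [u [h1 [h2 ->]]].
  simpl. auto.
Qed.

Definition x0 (X : NOb CC) : {x | FO X (Fo X) x} := exist _ (cone (Fo X)) (memX X).

Definition ap (X Y : NOb CC) (e : NHom CC X Y) : car S :=
  projT1 (proj1_sig (proj1_sig e (Fo X) (x0 X))).

Lemma ap_le1 (X Y : NOb CC) (e : NHom CC X Y) : sle S (ap X Y e) (Fo X).
Proof. apply (mem_char Y _ _ (proj2_sig (proj1_sig e (Fo X) (x0 X)))). Qed.
Lemma ap_le2 (X Y : NOb CC) (e : NHom CC X Y) : sle S (ap X Y e) (Fo Y).
Proof. apply (mem_char Y _ _ (proj2_sig (proj1_sig e (Fo X) (x0 X)))). Qed.

Lemma eta_val (X Y : NOb CC) (e : NHom CC X Y) d x :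
  proj1_sig (proj1_sig e d x) = cone (ap X Y e ** projT1 (proj1_sig x)).
Proof.
  destruct (mem_char X d _ (proj2_sig x)) as [hc [hd Hx]].
  set (f := projT1 (proj1_sig x)) in *.
  pose (k := smk C (Fo X) d f hc hd).
  assert (HM : FM X (Fo X) d k (proj1_sig (x0 X)) (proj1_sig x)).
  { rewrite FM_eq. apply Hrel_cone. exists (sidm C (Fo X)).
    rewrite (sval_idm C). split; [reflexivity|].
    unfold k. rewrite (sval_mk C). rewrite Hx at 1. f_equal.
    symmetry. apply le_comm. exact hc. }
  pose proof (proj2_sig e _ _ k (x0 X) x HM) as H. cbv beta in H.
  apply FM_iff in H. apply Hrel_cone in H as [f' [H1 H2]].
  assert (Hap : ap X Y e = sval C f') by (unfold ap; rewrite H1; reflexivity).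
  rewrite H2, Hap. unfold k. rewrite (sval_mk C). reflexivity.
Qed.

Definition FH (X Y : NOb CC) (e : NHom CC X Y) : sH D (Fo X) (Fo Y) :=
  smk D (Fo X) (Fo Y) (ap X Y e) (ap_le1 X Y e) (ap_le2 X Y e).

Lemma mk_mem (X Y : NOb CC) u (Hu2 : sle S u (Fo Y)) d (x : {x | FO X d x}) :
  FO Y d (cone (u ** projT1 (proj1_sig x))).
Proof.
  destruct (mem_char X d _ (proj2_sig x)) as [hc [hd Hx]].
  rewrite FO_eq. apply Hset_cone. eexists; split; [|split; [|reflexivity]].
  - eapply le_trans; [apply le_ml | exact Hu2].
  - eapply le_trans; [apply le_mr | exact hd].
Qed.

Definition mketa (X Y : NOb CC) u (Hu2 : sle S u (Fo Y)) : NHom CC X Y.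
Proof.
  refine (exist _ (fun d x => exist _ (cone (u ** projT1 (proj1_sig x))) (mk_mem X Y u Hu2 d x)) _).
  intros d d' k x y H. simpl. rewrite FM_eq in H |- *.
  apply Hrel_cone in H as [f [Hx Hy]]. apply Hrel_cone.
  assert (h1 : sle S (u ** sval C f) (Fo Y)) by (eapply le_trans; [apply le_ml | exact Hu2]).
  assert (h2 : sle S (u ** sval C f) d) by (eapply le_trans; [apply le_mr | apply (sval_le2 C)]).
  exists (smk C (Fo Y) d (u ** sval C f) h1 h2). rewrite (sval_mk C).
  destruct x as [xv xp], y as [yv yp]; simpl in Hx, Hy |- *; subst xv yv; simpl. split; [reflexivity|]. rewrite smulA. reflexivity.
Defined.

Theorem gen_iso : iso_ncat (NDual CC) (toCatIE D).
Proof.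
  exists Fo. exists FH. split; [|split; [|split; [|split; [|split]]]].
  - intro X. apply (sval_inj D). unfold FH. etransitivity; [apply (sval_mk D)|].
    symmetry. etransitivity; [apply (sval_idm D)|]. reflexivity.
  - intros X Y Z e1 e2. apply (sval_inj D). unfold FH.
    change (sval D (smk D (Fo X) (Fo Z) (ap X Z (Ncomp CC X Y Z e1 e2)) (ap_le1 _ _ _) (ap_le2 _ _ _))
      = sval D (scomp D (FH X Y e1) (FH Y Z e2))).
    unfold FH. rewrite (sval_comp D), !(sval_mk D).
    unfold ap at 1. simpl. rewrite eta_val. simpl. apply smulC.
  - split.
    + intros X Y E. rewrite (X_Xof X), (X_Xof Y), E. reflexivity.
    + intro c. exists (Xof c). apply F_Xof.
  - intros X Y. split.
    + intros e1 e2 E. apply (f_equal (sval D)) in E. unfold FH in E.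
      rewrite !(sval_mk D) in E.
      apply sig_eq. apply functional_extensionality_dep; intro d.
      apply functional_extensionality_dep; intro x.
      apply sig_eq. rewrite !eta_val, E. reflexivity.
    + intro h. exists (mketa X Y (sval D h) (sval_le2 D h)).
      apply (sval_inj D). unfold FH. rewrite (sval_mk D).
      unfold ap. simpl. apply (sval_le1 D h).
  - intros X Y. change (Nsub CC X Y <-> ssub D (Fo X) (Fo Y)).
    rewrite (ssub_le D). split.
    + intros [H1 _]. pose proof (H1 _ _ (memX X)) as H.
      destruct (mem_char Y _ _ H) as [h1 _]. exact h1.
    + intros Hle. split.
      * intros d x Hx. rewrite (FO_eq X) in Hx. rewrite (FO_eq Y).
        apply Hset_cone in Hx as [u [h1 [h2 ->]]]. apply Hset_cone.
        exists u. split; [exact (le_trans S _ _ _ h1 Hle)|split; [exact h2|reflexivity]].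
      * intros d d' k x y Hr. rewrite (FM_eq X) in Hr. rewrite (FM_eq Y).
        apply Hrel_cone in Hr as [f [-> ->]]. apply Hrel_cone.
        exists (smk C (Fo Y) d (sval C f) (le_trans S _ _ _ (sval_le1 C f) Hle) (sval_le2 C f)).
        rewrite (sval_mk C). split; reflexivity.
  - intros X Y h h'. apply (sval_inj D). unfold FH.
    change (sval D (smk D (Fo X) (Fo Y) (ap X Y (Nincl CC X Y h)) (ap_le1 _ _ _) (ap_le2 _ _ _))
      = sval D (sincl D h')).
    rewrite (sval_mk D), (sval_incl D). reflexivity.
Qed.

End Gen.

Theorem mainTheorem9 (S : semilattice) :
  iso_ncat (NDual (LS S)) (RS S) /\ iso_ncat (NDual (RS S)) (LS S).
Proof.
  split.
  - exact (gen_iso S (LSc S) (RSc S)).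
  - exact (gen_iso S (RSc S) (LSc S)).
Qed.
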